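(* Let $m,n$ be positive integers. Let $A, X$ be real symmetric $m\times m$ matrices and let $S_0,S_1,\ldots,S_{n-1},T$ be real symmetric $n\times n$ matrices such that \begin{itemize} \item $A\circ X = I_m\circ X = 0$ and $AX-XA=0$; \item $S_iT-TS_i=0$ for $i=0,1,\ldots,n-1$, and $S_i\circ T=0$ for $i=2,\ldots,n-1$. \end{itemize} Then the $mn\times mn$ matrices $\hat A=\sum_{j=0}^{n-1}(S_j\otimes A^j)$ (with $A^0=I_m$) and $\hat X=T\otimes X$ satisfy \[\hat A\circ \hat X = I_{mn}\circ \hat X = 0 \quad\text{and}\quad \hat A\hat X-\hat X\hat A=0.\]
   Context: $\circ$ denotes the entrywise (Hadamard) product and $\otimes$ the Kronecker product: for $P=(p_{ij})$, $P\otimes Q$ is the block matrix whose $(i,j)$ block is $p_{ij}Q$. $I_k$ is the $k\times k$ identity matrix. *)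

(* Defs.v *)
From mathcomp Require Import all_boot all_order all_algebra.
From mathcomp Require Export mxtens.
Set Implicit Arguments. Unset Strict Implicit. Unset Printing Implicit Defensive.
Import GRing.Theory Num.Theory.
Local Open Scope ring_scope.

Definition hadamard {R : pzRingType} {m n : nat} (A B : 'M[R]_(m, n)) : 'M[R]_(m, n) :=
  \matrix_(i, j) (A i j * B i j).

(* Main.v *)
Require Import Defs.
From mathcomp Require Import all_boot all_order all_algebra mxtens.
Import GRing.Theory Num.Theory.
Local Open Scope ring_scope.

Theorem lemma2p2 (R : realFieldType) (m' n' : nat)
  (A X : 'M[R]_m'.+1) (S : 'I_n'.+1 -> 'M[R]_n'.+1) (T : 'M[R]_n'.+1) :
  A^T = A -> X^T = X -> (forall i, (S i)^T = S i) -> T^T = T ->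
  hadamard A X = 0 -> hadamard 1%:M X = 0 -> A *m X - X *m A = 0 ->
  (forall i, S i *m T - T *m S i = 0) ->
  (forall i : 'I_n'.+1, (2 <= i)%N -> hadamard (S i) T = 0) ->
  let Ahat := \sum_(j < n'.+1) (S j *t A ^+ j) in
  let Xhat := T *t X in
  hadamard Ahat Xhat = 0 /\ hadamard 1%:M Xhat = 0 /\
  Ahat *m Xhat - Xhat *m Ahat = 0.
Proof.
move=> _ _ _ _ hAX h1X cAX cST hST Ahat Xhat.
have eAX a b : A a b * X a b = 0.
  by have := congr1 (fun M : 'M[R]_m'.+1 => M a b) hAX; rewrite /= !mxE.
have e1X a b : (1%:M : 'M[R]_m'.+1) a b * X a b = 0.
  by have := congr1 (fun M : 'M[R]_m'.+1 => M a b) h1X; rewrite /= !mxE.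
have eST (j : 'I_n'.+1) i k : (2 <= j)%N -> S j i k * T i k = 0.
  by move=> hj; have := congr1 (fun M : 'M[R]_n'.+1 => M i k) (hST j hj); rewrite /= !mxE.
split; [|split].
- apply/matrixP=> x y; rewrite mxE [RHS]mxE.
  case: (mxtens_indexP x)=> i a; case: (mxtens_indexP y)=> k b.
  rewrite summxE mulr_suml big1 // => j _.
  rewrite !tensmxE.
  case: j => [[|[|j]] hj] /=.
  + rewrite expr0 mulrACA.
    have e : (1 : 'M[R]_m'.+1) a b * X a b = 0 by exact: e1X.
    by rewrite e mulr0.
  + by rewrite expr1 mulrACA eAX mulr0.
  + by rewrite mulrACA (eST (Ordinal hj)) // mul0r.
- apply/matrixP=> x y; rewrite mxE [RHS]mxE.
  case: (mxtens_indexP x)=> i a; case: (mxtens_indexP y)=> k b.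
  rewrite tensmxE mxE (can_eq (@mxtens_indexK _ _)) xpair_eqE.
  case: (eqVneq a b) => [<-|ab].
    have := e1X a a; rewrite !mxE eqxx mulr1n mul1r => ->.
    by rewrite !mulr0.
  by rewrite andbF mul0r.
- apply/eqP; rewrite subr_eq0; apply/eqP.
  rewrite /Ahat /Xhat mulmx_suml mulmx_sumr; apply: eq_bigr => j _.
  rewrite !tensmx_mul; congr (_ *t _).
    by apply/eqP; rewrite -subr_eq0 cST.
  have c : GRing.comm X A by rewrite /GRing.comm -!mulmxE; apply/eqP; rewrite eq_sym -subr_eq0 cAX.
  by have := commrX j c; rewrite /GRing.comm -!mulmxE.
Qed.
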